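(* For every integer $t\ge1$ and every integer $u$ with $0\le u\le t$, $$\frac{2u+1}{2t}\ \ge\ \frac{1}{1+2t}+\frac{2t}{1+2t}\sum_{i=1}^u\frac{(-t)_i(-1)^i}{(t+i)\,(t)_i}\ \ge\ \frac{2u+1}{2t}-\frac{4u^3+6u^2+8u+3}{12t^2}.$$
   Context: $(a)_m=a(a+1)\cdots(a+m-1)$ denotes the rising factorial, with $(a)_0=1$. *)

(* Defs.v *)
From mathcomp Require Import all_boot all_order all_algebra.
Set Implicit Arguments. Unset Strict Implicit. Unset Printing Implicit Defensive.
Import Order.TTheory GRing.Theory Num.Theory.
Local Open Scope ring_scope.

Definition rising (R : pzRingType) (a : R) (m : nat) : R :=
  \prod_(k < m) (a + k%:R).

(* Main.v *)
Require Import Defs.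
From mathcomp Require Import all_boot all_order all_algebra.
From mathcomp Require Import ring lra.
Import Order.TTheory GRing.Theory Num.Theory.
Local Open Scope ring_scope.
Lemma mulrS_nat (R : pzSemiRingType) n : (n.+1%:R : R) = n%:R + 1. Proof. by rewrite -natr1. Qed.

Lemma rising_neg (T : rat) i : rising (- T) i * (-1) ^+ i = \prod_(j < i) (T - j%:R).
Proof.
elim: i => [|i IH]; first by rewrite /rising !big_ord0 expr0 mulr1.
rewrite /rising !big_ord_recr /= -/(rising _ _) exprS -IH; ring.
Qed.

Lemma rising_pos (T : rat) i : (T + i%:R) * rising T i = T * \prod_(j < i) (T + j.+1%:R).
Proof.
elim: i => [|i IH]; first by rewrite /rising !big_ord0 addr0 !mulr1.
rewrite /rising !big_ord_recr /= -/(rising _ _).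
rewrite mulrA -IH; rewrite !mulrS_nat; ring.
Qed.

Definition r (T : rat) i := \prod_(j < i) ((T - j%:R) / (T + j.+1%:R)).

Lemma term_eq (T : rat) i : 0 < T ->
  rising (- T) i * (-1) ^+ i / ((T + i%:R) * rising T i) = r T i / T.
Proof.
move=> hT; rewrite rising_neg rising_pos /r prodf_div invfM; ring.
Qed.

Lemma r_bounds (t : nat) i : (i <= t)%N -> (0 < t)%N ->
  0 <= r t%:R i <= 1 /\ 1 - (i%:R ^+ 2) / t%:R <= r t%:R i.
Proof.
move=> + ht; elim: i => [|i IH] hi.
  by rewrite /r big_ord0 expr0n /= mul0r subr0 lexx ?ler01.
have {IH} [/andP [h0 h1] hl] := IH (ltnW hi).
rewrite /r big_ord_recr /= -/(r _ _).
have hT : (0 : rat) < t%:R by rewrite ltr0n.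
have hit : (i%:R : rat) + 1 <= t%:R by rewrite natr1 ler_nat.
set f := ((t%:R - i%:R) / (t%:R + i.+1%:R)) : rat.
have hi0 : (0:rat) <= i%:R by rewrite ler0n.
have hf : 0 <= f <= 1.
  rewrite /f divr_ge0 ?subr_ge0 ?ler_nat ?(ltnW hi) ?addr_ge0 ?ler0n //=.
  rewrite ler_pdivrMr ?mulrS_nat; lra.
have hf2 : 1 - (2 * i%:R + 1) / t%:R <= f.
  have E : f - (1 - (2 * i%:R + 1) / t%:R)
     = ((2 * i%:R + 1) * (i%:R+1)) / (t%:R * (t%:R + (i%:R + 1))) :> rat.
    by rewrite /f mulrS_nat; field; apply/andP; split; lra.
  rewrite -subr_ge0 E.
  apply: divr_ge0; first by nra.
  by nra.
move/andP: hf => [hf0 hf1].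
split; first by rewrite mulr_ge0 //=; nra.
have e : (i.+1%:R ^+ 2) / t%:R = i%:R ^+ 2 / t%:R + (2 * i%:R + 1) / t%:R :> rat.
  by rewrite mulrS_nat; field; lra.
rewrite e; nra.
Qed.

Lemma sum_bounds (t u : nat) : (0 < t)%N -> (u <= t)%N ->
  let X := \sum_(1 <= i < u.+1) r t%:R i in
  X <= u%:R /\ 6 * t%:R * u%:R - u%:R * (u%:R + 1) * (2 * u%:R + 1) <= 6 * t%:R * X.
Proof.
move=> ht; elim: u => [|u IH] hu /=.
  rewrite big_geq // !mulr0 !mul0r !subrr; split; lra.
have [IH1 IH2] := IH (ltnW hu).
rewrite big_nat_recr //=.
have [_ hl] := @r_bounds t u.+1 hu ht.
have [/andP [_ h1] _] := @r_bounds t u.+1 hu ht.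
have hT : (0 : rat) < t%:R by rewrite ltr0n.
have hl' : 6 * t%:R - 6 * u.+1%:R ^+ 2 <= 6 * t%:R * r t%:R u.+1.
  have -> : 6 * t%:R - 6 * u.+1%:R ^+ 2 = 6 * t%:R * (1 - u.+1%:R ^+ 2 / t%:R) :> rat.
    by field; lra.
  by rewrite ler_pM2l //; lra.
rewrite !mulrS_nat in hl' *.
split; first lra.
rewrite mulrDr; nra.
Qed.

Theorem mainTheorem8 (t u : nat) (ht : (1 <= t)%N) (hu : (u <= t)%N) :
  let T : rat := t%:R in
  let U : rat := u%:R in
  let S : rat := 1 / (1 + 2 * T) + (2 * T) / (1 + 2 * T) *
     \sum_(1 <= i < u.+1) (rising (- T) i * (-1) ^+ i) /
                          ((T + i%:R) * rising T i) in
  ((2 * U + 1) / (2 * T) >= S) /\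
  (S >= (2 * U + 1) / (2 * T)
        - (4 * U ^+ 3 + 6 * U ^+ 2 + 8 * U + 3) / (12 * T ^+ 2)).
Proof.
move=> T U S.
have hT : (0 : rat) < T by rewrite ltr0n.
have hU : (0 : rat) <= U by rewrite ler0n.
have [X1 X2] := @sum_bounds t u ht hu.
set X := \sum_(1 <= i < u.+1) r t%:R i in X1 X2.
have ES : S = (1 + 2 * X) / (1 + 2 * T).
  rewrite /S (eq_big_nat _ _ (F2 := fun i => r T i / T)); last first.
    by move=> i _; rewrite term_eq.
  rewrite -mulr_suml -/X; field; lra.
rewrite ES; split.
  rewrite -subr_ge0.
  have -> : (2 * U + 1) / (2 * T) - (1 + 2 * X) / (1 + 2 * T)
     = (2 * U + 1 + 4 * T * (U - X)) / (2 * T * (1 + 2 * T)).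
    by field; lra.
  apply: divr_ge0; nra.
rewrite -subr_ge0.
have -> : (1 + 2 * X) / (1 + 2 * T) - ((2 * U + 1) / (2 * T)
        - (4 * U ^+ 3 + 6 * U ^+ 2 + 8 * U + 3) / (12 * T ^+ 2))
   = (12 * T ^+ 2 * (1 + 2 * X) - (6 * T * (2 * T + 1) * (2 * U + 1)
        - (2 * T + 1) * (4 * U ^+ 3 + 6 * U ^+ 2 + 8 * U + 3)))
     / (12 * T ^+ 2 * (1 + 2 * T)).
  by field; lra.
apply: divr_ge0; last by nra.
nra.
Qed.
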